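(* Let $G=B_{n_0,\dots,n_g}$ be a banana graph of genus $g\ge2$, consider the twice-marked graph $(G,u,v)=(G,v_{0,0},v_{0,n_0})$ with torsion order $k$, and let $D=g\,v_{0,n_0}$. If $D$ is submodular, then $\tau^{u,v}_D(b)=g-b$ for all $0\le b\le g$; consequently $k\ge g$ and $\mathrm{inv}_k(\tau^{u,v}_D)\ge\binom{g+1}{2}$.
   Context: A graph is a finite, connected, loopless multigraph (parallel edges allowed); its genus is $g=|E(G)|-|V(G)|+1$. A divisor is an element of the free abelian group on $V(G)$. Linear equivalence $\sim$ is generated by chip-firing (firing $w$ subtracts $\mathrm{val}(w)$ chips from $w$ and adds to each other vertex the number of edges joining it to $w$). The rank $r(D)$ is $-1$ if $D$ is not equivalent to an effective divisor, else the largest $r\ge0$ such that $D-E$ is equivalent to an effective divisor for every effective $E$ of degree $r$. $\delta(P)$ is $1$ if $P$ holds and $0$ otherwise. A twice-marked graph $(G,u,v)$ is a graph with two chosen vertices; its torsion order is the least $k\ge1$ with $ku\sim kv$. A twist of $D$ is $D+au+bv$. $\Delta(D)=r(D)-r(D-u)-r(D-v)+r(D-u-v)$. $D$ is submodular if $\Delta(D')\ge0$ for all twists $D'$. If $D$ is submodular, its transmission permutation $\tau^{u,v}_D$ is the unique bijection $\mathbb Z\to\mathbb Z$ with $\delta(\tau^{u,v}_D(b)=a)=\Delta(D+au-bv)$ for all $a,b$; it satisfies $\tau^{u,v}_D(n+k)=\tau^{u,v}_D(n)+k$ when $ku\sim kv$. An inversion of a bijection $\tau$ is a pair $(a,b)$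 with $a<b$, $\tau(a)>\tau(b)$; two inversions $(a,b),(a',b')$ are $k$-equivalent if $a-a'=b-b'\equiv0\pmod k$; $\mathrm{inv}_k(\tau)$ is the number of classes. For positive integers $n_0,\dots,n_g$, the banana graph $B_{n_0,\dots,n_g}$ is obtained by joining two vertices by $g+1$ internally disjoint paths of lengths $n_0,\dots,n_g$; it has genus $g$. Its vertices are labelled $v_{\alpha,i}$ ($0\le\alpha\le g$, $0\le i\le n_\alpha$), with $v_{\alpha,i}$ at distance $i$ from $v_{0,0}$ along the $\alpha$-th path; $v_{0,0}$ and $v_{0,n_0}$ are the two multivalent vertices. *)

(* Defs.v *)
From HB Require Import structures.
From mathcomp Require Import all_boot all_order all_algebra.
From Stdlib Require Import ClassicalEpsilon.
Set Implicit Arguments.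
Unset Strict Implicit.
Unset Printing Implicit Defensive.
Import Order.TTheory GRing.Theory Num.Theory.
Local Open Scope ring_scope.

(* Chip-firing on a loopless multigraph with vertex set V and edge     *)
(* multiplicity m : V -> V -> nat (m x y = number of edges x -- y).    *)
Section ChipFiring.
Variables (V : finType) (m : V -> V -> nat).

Definition divisor := V -> int.

Definition valence (w : V) : nat := (\sum_(x : V | x != w) m w x)%N.

Definition deg (D : divisor) : int := \sum_(x : V) D x.

Definition effective (D : divisor) : Prop := forall x, 0 <= D x.

(* This is the equivalence relation
   generated by chip-firing moves. *)
Definition linequiv (D D' : divisor) : Prop :=
  exists f : V -> int, forall x : V,
    D' x = D x - f x * (valence x)%:R + \sum_(y : V | y != x) f y * (m y x)%:R.

Definition equiv_effective (D : divisor) : Prop :=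
  exists F : divisor, effective F /\ linequiv D F.

Definition rank_prop (D : divisor) (r : nat) : Prop :=
  forall E : divisor, effective E -> deg E = r%:Z ->
    equiv_effective (fun x => D x - E x).

Definition is_rank (D : divisor) (r : int) : Prop :=
  (~ equiv_effective D /\ r = -1) \/
  (equiv_effective D /\ exists n : nat, r = n%:Z /\ rank_prop D n /\
      forall n' : nat, rank_prop D n' -> (n' <= n)%N).

Definition rank (D : divisor) : int := epsilon (inhabits 0) (is_rank D).

Definition pt (w : V) (a : int) : divisor := fun x => a * (x == w)%:R.

Definition twist (u v : V) (D : divisor) (a b : int) : divisor :=
  fun x => D x + a * (x == u)%:R + b * (x == v)%:R.

Definition Delta (u v : V) (D : divisor) : int :=
  rank D - rank (twist u v D (-1) 0) - rank (twist u v D 0 (-1))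
    + rank (twist u v D (-1) (-1)).

Definition submodular (u v : V) (D : divisor) : Prop :=
  forall a b : int, 0 <= Delta u v (twist u v D a b).

Definition is_transmission_perm (u v : V) (D : divisor) (tau : int -> int) : Prop :=
  bijective tau /\
  forall a b : int, Delta u v (twist u v D a (- b)) = (tau b == a)%:R.

Definition is_torsion_order (u v : V) (k : nat) : Prop :=
  (0 < k)%N /\ linequiv (pt u k%:Z) (pt v k%:Z) /\
  forall j : nat, (0 < j < k)%N -> ~ linequiv (pt u j%:Z) (pt v j%:Z).

End ChipFiring.

Definition inversion (tau : int -> int) (p : int * int) : Prop :=
  p.1 < p.2 /\ tau p.2 < tau p.1.

Definition kequiv (k : nat) (p q : int * int) : Prop :=
  p.1 - q.1 = p.2 - q.2 /\ (k%:Z %| p.1 - q.1)%Z.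

(* inv_k(tau) >= N : there are at least N pairwise non-k-equivalent
   inversions, i.e. at least N k-equivalence classes of inversions. *)
Definition inv_k_ge (tau : int -> int) (k N : nat) : Prop :=
  exists s : seq (int * int), size s = N /\
    (forall p, p \in s -> inversion tau p) /\
    (forall i j : nat, (i < j < size s)%N ->
        ~ kequiv k (nth (0, 0) s i) (nth (0, 0) s j)).

(* Vertices: inl false = v_{0,0}, inl true = v_{0,n_0} (the two         *)
(* multivalent vertices), inr (alpha, j) = internal vertex              *)
(* v_{alpha, j+1} of the alpha-th path (0 <= j < n_alpha - 1).          *)
Section Banana.
Variables (g : nat) (n : 'I_g.+1 -> nat).

Definition bvert : finType := (bool + {a : 'I_g.+1 & 'I_(n a).-1})%type.

(* the vertex v_{alpha,i}, 0 <= i <= n_alpha *)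
Definition bv (a : 'I_g.+1) (i : nat) : bvert :=
  if i == 0%N then inl false else
  match (insub i.-1 : option 'I_(n a).-1) with
  | Some j => inr (Tagged (fun a => 'I_(n a).-1) j)
  | None => inl true
  end.

(* number of edges between x and y: the alpha-th path has edges
   v_{alpha,i} -- v_{alpha,i+1} for 0 <= i < n_alpha *)
Definition bmult (x y : bvert) : nat :=
  (\sum_(a : 'I_g.+1) \sum_(i < n a)
     (((bv a i == x) && (bv a i.+1 == y)) || ((bv a i == y) && (bv a i.+1 == x))))%N.

Definition bu : bvert := bv ord0 0.
Definition bvv : bvert := bv ord0 (n ord0).

Definition bD : divisor bvert := pt bvv g%:Z.

End Banana.

Arguments bD [g] n _.
Arguments bu [g] n.
Arguments bmult [g] n x y.
Arguments bvv [g] n.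

(* Main.v *)
Require Import Defs.
From HB Require Import structures.
From mathcomp Require Import all_boot all_order all_algebra.
From mathcomp Require Import zify ring lra.
From Stdlib Require Import ClassicalEpsilon Classical.
Import Order.TTheory GRing.Theory Num.Theory.
Local Open Scope ring_scope.
Set Implicit Arguments. Unset Strict Implicit.

Section Gen.
Variables (V : finType) (m : V -> V -> nat).

Definition Lap (f : V -> int) (x : V) : int :=
  \sum_(y : V | y != x) f y * (m y x)%:R - f x * (valence m x)%:R.

Lemma linequivE (D D' : divisor V) :
  linequiv m D D' <-> exists f, forall x, D' x = D x + Lap f x.
Proof. by split=> [[f Hf]|[f Hf]]; exists f => x; rewrite Hf /Lap; ring. Qed.

Lemma Lap_add f h x : Lap (fun y => f y + h y) x = Lap f x + Lap h x.
Proof.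
rewrite /Lap (eq_bigr (fun y => f y * (m y x)%:R + h y * (m y x)%:R)); last first.
  by move=> y _; rewrite mulrDl.
rewrite big_split /=; ring.
Qed.

Lemma Lap_opp f x : Lap (fun y => - f y) x = - Lap f x.
Proof.
rewrite /Lap (eq_bigr (fun y => - (f y * (m y x)%:R))); last first.
  by move=> y _; rewrite mulNr.
rewrite sumrN; ring.
Qed.

Lemma Lap0 x : Lap (fun _ => 0) x = 0.
Proof. by rewrite /Lap big1 ?mul0r ?subr0 // => y _; rewrite mul0r. Qed.

Lemma Lap_sum f : \sum_x Lap f x = 0.
Proof.
rewrite /Lap sumrB.
have -> : \sum_x \sum_(y | y != x) f y * (m y x)%:R = \sum_y f y * (valence m y)%:R.
  rewrite (exchange_big_dep xpredT) //=.
  apply: eq_bigr => y _; rewrite /valence natr_sum mulr_sumr.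
  by apply: eq_big => [x|x _]; rewrite // eq_sym.
by rewrite subrr.
Qed.

Lemma linequiv_refl D : linequiv m D D.
Proof. by apply/linequivE; exists (fun _ => 0) => x; rewrite Lap0 addr0. Qed.

Lemma linequiv_eq (D D' : divisor V) : (forall x, D' x = D x) -> linequiv m D D'.
Proof. by move=> H; apply/linequivE; exists (fun _ => 0) => x; rewrite Lap0 addr0 H. Qed.

Lemma linequiv_sym D D' : linequiv m D D' -> linequiv m D' D.
Proof.
move/linequivE=> [f Hf]; apply/linequivE; exists (fun y => - f y) => x.
by rewrite Lap_opp Hf; ring.
Qed.

Lemma linequiv_trans D1 D2 D3 : linequiv m D1 D2 -> linequiv m D2 D3 -> linequiv m D1 D3.
Proof.
move/linequivE=> [f Hf] /linequivE [h Hh]; apply/linequivE.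
exists (fun y => f y + h y) => x; rewrite Lap_add Hh Hf; ring.
Qed.

Lemma linequiv_add D1 D1' D2 D2' : linequiv m D1 D1' -> linequiv m D2 D2' ->
  linequiv m (fun x => D1 x + D2 x) (fun x => D1' x + D2' x).
Proof.
move/linequivE=> [f Hf] /linequivE [h Hh]; apply/linequivE.
exists (fun y => f y + h y) => x; rewrite Lap_add Hh Hf; ring.
Qed.

Lemma deg_linequiv D D' : linequiv m D D' -> deg D' = deg D.
Proof.
move/linequivE=> [f Hf]; rewrite /deg (eq_bigr (fun x => D x + Lap f x)) //.
by rewrite big_split /= Lap_sum addr0.
Qed.

Lemma equiv_eff_lin D D' : linequiv m D D' -> equiv_effective m D' -> equiv_effective m D.
Proof. by move=> H [F [HF H']]; exists F; split=> //; apply: linequiv_trans H'. Qed.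

Lemma deg_pt (w : V) a : deg (pt w a : divisor V) = a.
Proof.
rewrite /deg /pt (bigD1 w) //= eqxx mulr1 big1 ?addr0 // => x /negbTE ->.
by rewrite mulr0.
Qed.

Lemma effective_deg (F : divisor V) : effective F -> 0 <= deg F.
Proof. by move=> H; rewrite /deg sumr_ge0. Qed.

End Gen.
Section Rank.
Variables (V : finType) (m : V -> V -> nat) (w0 : V).

Lemma rank_prop_lin (D D' : divisor V) n : linequiv m D D' -> rank_prop m D n -> rank_prop m D' n.
Proof.
move=> HD H E HE HdE; have := H E HE HdE; apply: equiv_eff_lin.
exact: (linequiv_add (linequiv_sym HD) (linequiv_refl m (fun x => - E x))).
Qed.

Lemma deg_add (D1 D2 : divisor V) : deg (fun x => D1 x + D2 x) = deg D1 + deg D2.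
Proof. by rewrite /deg big_split. Qed.

Lemma deg_sub (D1 D2 : divisor V) : deg (fun x => D1 x - D2 x) = deg D1 - deg D2.
Proof. by rewrite /deg sumrB. Qed.

Lemma pt_ge0 (w : V) (a : int) x : 0 <= a -> 0 <= pt w a x.
Proof. by move=> ha; rewrite /pt mulr_ge0 // ler0n. Qed.

Lemma rank_prop_down (D : divisor V) n n' : rank_prop m D n -> (n' <= n)%N -> rank_prop m D n'.
Proof.
move=> H le E' HE' Hd.
have Hdeg : deg (fun x => E' x + pt w0 (n - n')%N%:Z x) = n%:Z.
  by rewrite deg_add Hd deg_pt; lia.
have [F [HF HL]] := H (fun x => E' x + pt w0 (n - n')%N%:Z x)
  (fun x => addr_ge0 (HE' x) (pt_ge0 _ _ (le0z_nat _))) Hdeg.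
exists (fun x => F x + pt w0 (n - n')%N%:Z x); split.
  by move=> x; apply: addr_ge0 (HF x) (pt_ge0 _ _ (le0z_nat _)).
apply: linequiv_trans
  (linequiv_add HL (linequiv_refl m (fun x => pt w0 (n - n')%N%:Z x))).
by apply: linequiv_eq => x; ring.
Qed.

Lemma rank_prop_bound (D : divisor V) n : rank_prop m D n -> n%:Z <= deg D.
Proof.
move=> H; have [F [HF HL]] := H (pt w0 n%:Z) (fun x => pt_ge0 _ _ (le0z_nat _)) (deg_pt _ _).
have := deg_linequiv HL; rewrite deg_sub deg_pt => Hd.
have := effective_deg HF; rewrite Hd; lia.
Qed.

Lemma rank_prop0 (D : divisor V) : equiv_effective m D -> rank_prop m D 0.
Proof.
move=> H E HE Hd; apply: equiv_eff_lin H; apply: linequiv_eq => x.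
have : E x = 0.
  move: Hd; rewrite /deg => /eqP; rewrite psumr_eq0; last by move=> y _; exact: HE.
  by move/allP/(_ x); rewrite mem_index_enum => /(_ isT) /eqP.
by move=> ->; rewrite subr0.
Qed.

Lemma maxP_nat (P : nat -> Prop) B : P 0%N -> (forall n, P n -> (n <= B)%N) ->
  exists n, P n /\ forall n', P n' -> (n' <= n)%N.
Proof.
elim: B => [|B IH] H0 HB.
  by exists 0%N; split=> // n' /HB.
case: (classic (P B.+1)) => HP.
  by exists B.+1; split.
apply: IH => // n Hn; have := HB n Hn; rewrite leq_eqVlt => /orP [/eqP E|//].
by rewrite E in Hn.
Qed.

Lemma is_rank_ex (D : divisor V) : exists r, is_rank m D r.
Proof.
case: (classic (equiv_effective m D)) => He; last by exists (-1); left.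
have HB : forall n, rank_prop m D n -> (n <= `|deg D|)%N.
  by move=> n /rank_prop_bound; lia.
have [n [Hn Hmax]] := @maxP_nat (rank_prop m D) `|deg D|%N (rank_prop0 He) HB.
by exists n%:Z; right; split=> //; exists n.
Qed.

Lemma rank_spec (D : divisor V) : is_rank m D (rank m D).
Proof. exact: (epsilon_spec (inhabits 0) (is_rank m D) (is_rank_ex D)). Qed.

Lemma is_rank_uniq (D : divisor V) r1 r2 : is_rank m D r1 -> is_rank m D r2 -> r1 = r2.
Proof.
case=> [[H1 ->]|[H1 [n1 [-> [P1 M1]]]]] [[H2 ->]|[H2 [n2 [-> [P2 M2]]]]] //.
by have := M1 _ P2; have := M2 _ P1; move=> a b; congr Posz; apply/eqP; rewrite eqn_leq a b.
Qed.

Lemma rank_ge (D : divisor V) n : equiv_effective m D -> rank_prop m D n -> n%:Z <= rank m D.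
Proof.
move=> He Hp; case: (rank_spec D) => [[H _]|[_ [n0 [-> [_ M]]]]] //.
by rewrite lez_nat; apply: M.
Qed.

Lemma rank_le (D : divisor V) n : ~ rank_prop m D n.+1 -> rank m D <= n%:Z.
Proof.
move=> Hn; case: (rank_spec D) => [[_ ->]|[_ [n0 [-> [P _]]]]] //.
rewrite lez_nat leqNgt; apply/negP => lt; apply: Hn; exact: rank_prop_down P lt.
Qed.

Lemma rank_neg (D : divisor V) : ~ equiv_effective m D -> rank m D = -1.
Proof. by move=> He; case: (rank_spec D) => [[_ ->]|[H _]]. Qed.

Lemma rank_lin (D D' : divisor V) : linequiv m D D' -> rank m D = rank m D'.
Proof.
move=> HL; apply: (@is_rank_uniq D'); last exact: rank_spec.
have HL' := linequiv_sym HL.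
case: (rank_spec D) => [[H ->]|[H [n [-> [P M]]]]].
  by left; split=> // H'; apply: H; apply: equiv_eff_lin H'.
right; split; first exact: equiv_eff_lin HL' H.
exists n; split=> //; split; first exact: rank_prop_lin P.
by move=> n' /(rank_prop_lin HL'); apply: M.
Qed.

End Rank.
Section Cut.
Variables (V : finType) (m : V -> V -> nat).
Hypothesis msym : forall x y, m x y = m y x.

Lemma LapE f x : Lap m f x = \sum_(y : V) (f y - f x) * (m x y)%:R.
Proof.
rewrite [RHS](bigD1 x) //= subrr mul0r add0r /Lap /valence natr_sum mulr_sumr -sumrB.
by apply: eq_bigr => y _; rewrite mulrBl msym.
Qed.

Lemma noneff (D : divisor V) (u : V) : D u < 0 ->
  (forall M : {set V}, u \notin M -> (exists x, x \in M) ->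
     \sum_(x in M) D x < \sum_(x in M) \sum_(y in ~: M) (m x y)%:R) ->
  ~ equiv_effective m D.
Proof.
move=> Hu HM [F [HF /linequivE [f Hf]]].
case: (@arg_maxP _ _ _ u xpredT f isT) => x0 _ Hx0.
have Hle y : f y <= f x0 by exact: Hx0.
pose M := [set x | f x == f x0].
have uM : u \notin M.
  rewrite inE; apply/negP => /eqP Efu.
  have : F u <= D u.
    rewrite Hf LapE gerDl; apply: sumr_le0 => y _; apply: mulr_le0_ge0 => //.
    by rewrite subr_le0 Efu Hle.
  by have := HF u; lia.
have x0M : x0 \in M by rewrite inE.
have H1 := HM M uM (ex_intro _ x0 x0M).
have H2 : 0 <= \sum_(x in M) F x by apply: sumr_ge0 => x _; exact: HF.
have H3 : \sum_(x in M) F x <= \sum_(x in M) D x - \sum_(x in M) \sum_(y in ~: M) (m x y)%:R.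
  rewrite -sumrB; apply: ler_sum => x xM; rewrite Hf LapE lerD2l.
  apply: (@le_trans _ _ (\sum_y (if y \in ~: M then - (m x y)%:R else 0))); last first.
    by rewrite -big_mkcond sumrN.
  apply: ler_sum => y _; move: xM; rewrite !inE => /eqP fx.
  case: ifP => [yM|/negbT]; last by rewrite negbK => /eqP ->; rewrite fx subrr mul0r.
  rewrite -mulN1r; apply: ler_wpM2r => //.
  by have := Hle y; move: yM => /eqP; lia.
by move: H1 H2 H3; lra.
Qed.

End Cut.
Section Banana.
Variables (g : nat) (n : 'I_g.+1 -> nat).
Hypothesis npos : forall a, (0 < n a)%N.
Local Notation V := (bvert n).

Lemma bv0 a : bv n a 0 = inl false :> V.
Proof. by []. Qed.

Lemma bvN a : bv n a (n a) = inl true :> V.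
Proof.
rewrite /bv; case: eqP (npos a) => [->//|_ _].
by rewrite insubN // ltnn.
Qed.

Lemma bvI a (j : 'I_(n a).-1) : bv n a j.+1 = inr (Tagged (fun a => 'I_(n a).-1) j) :> V.
Proof. by rewrite /bv /= valK. Qed.

Definition pos a (z : V) : nat :=
  match z with inl b => if b then n a else 0%N | inr s => (val (tagged s)).+1 end.

Definition tg (z : V) : option 'I_g.+1 :=
  match z with inl _ => None | inr s => Some (tag s) end.

Lemma bv_cases a q : (q <= n a)%N ->
  [\/ q = 0%N /\ bv n a q = inl false, q = n a /\ bv n a q = inl true |
      exists j : 'I_(n a).-1, q = j.+1 /\ bv n a q = inr (Tagged (fun a => 'I_(n a).-1) j)].
Proof.
move=> le; case: q le => [|q] le; first by constructor 1.
case: (ltnP q (n a).-1) => lt.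
  by constructor 3; exists (Ordinal lt); split=> //; rewrite (bvI (Ordinal lt)).
have -> : q.+1 = n a by have := npos a; lia.
by constructor 2; rewrite bvN.
Qed.

Lemma pos_bv a q : (q <= n a)%N -> pos a (bv n a q) = q.
Proof. by move=> /bv_cases [[-> ->]|[-> ->]|[j [-> ->]]]. Qed.

Lemma tg_bv a q : (tg (bv n a q) == None) || (tg (bv n a q) == Some a).
Proof.
rewrite /bv; case: ifP => _ //; case: insubP => [j _ _|_] //=.

Qed.

Lemma bv_eq a p q : (p <= n a)%N -> (q <= n a)%N -> (bv n a p == bv n a q) = (p == q).
Proof.
move=> hp hq; apply/eqP/eqP => [E|->//].
by rewrite -(pos_bv hp) -(pos_bv hq) E.
Qed.

Lemma bv_neq_succ a i : (i < n a)%N -> bv n a i != bv n a i.+1.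
Proof. by move=> lt; rewrite bv_eq ?(ltnW lt) // neq_ltn ltnSn. Qed.

Lemma bv_cover a (z : V) :
  (exists2 q, (q <= n a)%N & z = bv n a q) \/ (tg z != None /\ tg z != Some a).
Proof.
case: z => [[]|s].
- by left; exists (n a); rewrite ?bvN.
- by left; exists 0%N.
case: (eqVneq (tag s) a) => [E|ne]; last by right; split; rewrite //= (inj_eq Some_inj).
left; case: s E => b j /= E; subst b; exists (val j).+1; last by rewrite (bvI j).
have h1 : (val j < (n a).-1)%N := ltn_ord j.
by have := npos a; lia.
Qed.

Lemma bmult_sym (x y : V) : bmult n x y = bmult n y x.
Proof. by apply: eq_bigr => a _; apply: eq_bigr => i _; rewrite orbC. Qed.

End Banana.
Lemma sum_ge_term (I : finType) (P : pred I) (F : I -> nat) i :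
  P i -> (F i <= \sum_(j | P j) F j)%N.
Proof. by move=> Pi; rewrite (bigD1 i) //= leq_addr. Qed.

Section BananaCut.
Variables (g : nat) (n : 'I_g.+1 -> nat).
Hypothesis npos : forall a, (0 < n a)%N.
Local Notation V := (bvert n).

Definition ed a (i : nat) (x y : V) : bool :=
  ((bv n a i == x) && (bv n a i.+1 == y)) || ((bv n a i == y) && (bv n a i.+1 == x)).

Definition cutn (M : {set V}) : nat := (\sum_(x in M) \sum_(y in ~: M) bmult n x y)%N.

Lemma cutnE M : cutn M =
  (\sum_a \sum_(x in M) \sum_(y in ~: M) \sum_(i < n a) ed a i x y)%N.
Proof.
rewrite /cutn /bmult /ed.
under eq_bigr => x _ do rewrite exchange_big.
by rewrite exchange_big.
Qed.

Lemma path_cross a (M : {set V}) p q : (p <= n a)%N -> (q <= n a)%N ->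
  bv n a p \notin M -> bv n a q \in M ->
  (0 < \sum_(x in M) \sum_(y in ~: M) \sum_(i < n a) ed a i x y)%N.
Proof.
move=> hp hq pM qM.
case: (boolP [exists i : 'I_(n a), (bv n a i \in M) != (bv n a i.+1 \in M)]).
  move=> /existsP [i Hi].
  case: (boolP (bv n a i \in M)) => iM.
    have Hi' : bv n a i.+1 \in ~: M by rewrite inE; move: Hi; rewrite iM; case: (_ \in M).
    apply: leq_trans (sum_ge_term _ iM); apply: leq_trans (sum_ge_term _ Hi').
    apply: leq_trans (sum_ge_term _ (isT : xpredT i)).
    by rewrite /ed !eqxx.
  have Hi1 : bv n a i.+1 \in M by move: Hi; rewrite (negbTE iM); case: (_ \in M).
  have Hi' : bv n a i \in ~: M by rewrite inE iM.
  apply: leq_trans (sum_ge_term _ Hi1); apply: leq_trans (sum_ge_term _ Hi').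
  apply: leq_trans (sum_ge_term _ (isT : xpredT i)).
  by rewrite /ed !eqxx orbT.
rewrite negb_exists => /forallP H.
have Hc : forall j, (j <= n a)%N -> (bv n a j \in M) = (bv n a 0 \in M).
  elim=> [//|j IH] hj.
  have := H (Ordinal hj); rewrite negbK /= => /eqP <-.
  by apply: IH; apply: ltnW.
by move: qM; rewrite Hc // -(Hc p hp) (negbTE pM).
Qed.

Lemma cut_full (M : {set V}) :
  (forall a, exists p q, [/\ (p <= n a)%N, (q <= n a)%N, bv n a p \notin M & bv n a q \in M]) ->
  (g.+1 <= cutn M)%N.
Proof.
move=> H; rewrite cutnE.
apply: (@leq_trans (\sum_(a < g.+1) 1)%N); first by rewrite sum_nat_const card_ord muln1.
apply: leq_sum => a _; have [p [q [hp hq pM qM]]] := H a; exact: path_cross hp hq pM qM.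
Qed.

Lemma cut_one (M : {set V}) a p q : (p <= n a)%N -> (q <= n a)%N ->
  bv n a p \notin M -> bv n a q \in M -> (0 < cutn M)%N.
Proof.
move=> hp hq pM qM; rewrite cutnE.
apply: leq_trans (sum_ge_term _ (isT : xpredT a)); exact: path_cross hp hq pM qM.
Qed.

Lemma cut_int (M : {set V}) :
  \sum_(x in M) \sum_(y in ~: M) ((bmult n x y)%:R : int) = (cutn M)%:R.
Proof. by rewrite /cutn natr_sum; apply: eq_bigr => x _; rewrite natr_sum. Qed.

Definition xy (x y : int) : divisor V := fun z => pt (bu n) x z + pt (bvv n) y z.

Lemma bu_def : bu n = inl false. Proof. by []. Qed.
Lemma bvv_def : bvv n = inl true. Proof. exact: bvN. Qed.

Lemma sum_pt (M : {set V}) w c : \sum_(z in M) pt w c z = if w \in M then c else 0.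
Proof.
rewrite /pt; case: ifP => wM.
  rewrite (bigD1 w) //= eqxx mulr1 big1 ?addr0 // => z /andP [_ /negbTE ->].
  by rewrite mulr0.
apply: big1 => z zM; case: eqP => [E|_]; last by rewrite mulr0.
by rewrite -E zM in wM.
Qed.

Lemma inr_path (z : V) : z != inl false -> z != inl true ->
  exists a, exists2 q, (q <= n a)%N & z = bv n a q.
Proof.
case: z => [[]//|s] _ _; exists (tag s).
case: (bv_cover npos (tag s) (inr s)) => // [[_]] /=.
by rewrite eqxx.
Qed.

Lemma noneff_xy x y :
  ((x < 0) && (y <= g%:Z)) || ((y < 0) && (x <= g%:Z)) ->
  ~ equiv_effective (bmult n) (xy x y).
Proof.
case/orP => /andP [hx hy].
- apply: (noneff (@bmult_sym _ n) (u := inl false)).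
    by rewrite /xy /pt bu_def bvv_def /= mulr1 mulr0 addr0.
  move=> M uM [z zM]; rewrite cut_int /xy big_split /= !sum_pt bu_def bvv_def (negbTE uM) add0r.
  case: ifP => vM.
    have : (g.+1 <= cutn M)%N.
      apply: cut_full => a; exists 0%N, (n a); split=> //; by rewrite ?bvN.
    by rewrite natz => h; lia.
  have [a [q hq E]] : exists a, exists2 q, (q <= n a)%N & z = bv n a q.
    apply: inr_path; apply/negP => /eqP E; subst z.
      by rewrite zM in uM.
    by rewrite zM in vM.
  have : (0 < cutn M)%N by apply: (@cut_one M a 0 q) => //; rewrite -?E.
  by rewrite natz => h; lia.
- apply: (noneff (@bmult_sym _ n) (u := inl true)).
    by rewrite /xy /pt bu_def bvv_def /= mulr1 mulr0 add0r.
  move=> M uM [z zM]; rewrite cut_int /xy big_split /= !sum_pt bu_def bvv_def (negbTE uM) addr0.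
  case: ifP => vM.
    have : (g.+1 <= cutn M)%N.
      apply: cut_full => a; exists (n a), 0%N; split=> //; by rewrite ?bvN.
    by rewrite natz => h; lia.
  have [a [q hq E]] : exists a, exists2 q, (q <= n a)%N & z = bv n a q.
    apply: inr_path; apply/negP => /eqP E; subst z.
      by rewrite zM in vM.
    by rewrite zM in uM.
  have : (0 < cutn M)%N by apply: (@cut_one M a (n a) q) => //; rewrite -?E ?bvN.
  by rewrite natz => h; lia.
Qed.

End BananaCut.
Definition phi (N p x : nat) : int := (minn (minn x (N - x)) (minn p (N - p)))%:Z.

Lemma phiE N p x : (x <= N)%N -> phi N p x =
  (if (x <= minn p (N - p))%N then x else if (N - minn p (N - p) <= x)%N then N - x else minn p (N - p))%N%:Z.
Proof. move=> hx; rewrite /phi; case: ifP => h1; [|case: ifP => h2]; lia. Qed.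

Lemma arith N p q : (0 < p < N)%N -> (q <= N)%N ->
  (q == 0%N)%:R + (q == N)%:R + ((if (q < N)%N then phi N p q - phi N p q.+1 else 0)
    + (if (0 < q <= N)%N then phi N p q.-1.+1 - phi N p q.-1 else 0))
  = (q == p)%:R + (q == (N - p)%N)%:R :> int.
Proof.
move=> hp hq.
have hs1 : (1 <= minn p (N - p))%N by lia.
have hs2 : (2 * minn p (N - p) <= N)%N by lia.
have hs3 : (minn p (N - p) == p) || (minn p (N - p) == N - p)%N by lia.
rewrite hq andbT.
case: (posnP q) => h0; case: (ltngtP q N) => h2 //; rewrite /= ?addr0 ?add0r.
all: rewrite ?phiE; try lia.
all: move: hs1 hs2 hs3; move: (minn p (N - p)) => s hs1 hs2 hs3.
all: case: (q =P p) => h3; case: (q =P (N - p)%N) => h4; rewrite /=.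
all: by repeat (case: ifP => ?); lia.
Qed.

Lemma sum_ord_ind N (F : nat -> int) q :
  \sum_(i < N) (i == q :> nat)%:R * F i = if (q < N)%N then F q else 0.
Proof.
case: ltnP => h.
  rewrite (bigD1 (Ordinal h)) //= eqxx mul1r big1 ?addr0 // => i ne.
  case: eqP => [E|]; last by rewrite mul0r.
  by move: ne; rewrite (_ : i = Ordinal h) ?eqxx //; apply: val_inj.
apply: big1 => i _; case: eqP => [E|]; last by rewrite mul0r.
by have := ltn_ord i; rewrite E ltnNge h.
Qed.

Lemma sum_ord_ind1 N (F : nat -> int) q :
  \sum_(i < N) (i.+1 == q :> nat)%:R * F i = if (0 < q <= N)%N then F q.-1 else 0.
Proof.
case: q => [|q] /=.
  by apply: big1 => i _; rewrite mul0r.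
by rewrite (eq_bigr (fun i : 'I_N => (i == q :> nat)%:R * F i)) ?sum_ord_ind.
Qed.

Section BananaFire.
Variables (g : nat) (n : 'I_g.+1 -> nat).
Hypothesis npos : forall a, (0 < n a)%N.
Local Notation V := (bvert n).

Lemma sum_ind (F : V -> int) w : \sum_y F y * (w == y)%:R = F w.
Proof.
rewrite (bigD1 w) //= eqxx mulr1 big1 ?addr0 // => y /negbTE.
by rewrite eq_sym => ->; rewrite mulr0.
Qed.

Lemma edge_sum (h : V -> int) z b (i : nat) : (i < n b)%N ->
  \sum_y (h y - h z) * (ed b i z y)%:R =
  (bv n b i == z)%:R * (h (bv n b i.+1) - h (bv n b i))
  + (bv n b i.+1 == z)%:R * (h (bv n b i) - h (bv n b i.+1)).
Proof.
move=> lt; have ne := bv_neq_succ npos lt.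
rewrite /ed; case: (eqVneq (bv n b i) z) => [<-|ne1].
  rewrite (eq_sym (bv n b i.+1) (bv n b i)) (negbTE ne).
  rewrite (eq_bigr (fun y => (h y - h (bv n b i)) * (bv n b i.+1 == y)%:R)).
    by rewrite sum_ind /= mul0r addr0 mul1r.
  by move=> y _; rewrite andbF orbF.
case: (eqVneq (bv n b i.+1) z) => [<-|ne2].
  rewrite ?(negbTE ne).
  rewrite (eq_bigr (fun y => (h y - h (bv n b i.+1)) * (bv n b i == y)%:R)).
    by rewrite sum_ind /= mul0r add0r mul1r.
  by move=> y _; rewrite andbT.
rewrite ?(negbTE ne1) ?(negbTE ne2) /= mul0r add0r mul0r; apply: big1 => y _.
by rewrite andbF mulr0.
Qed.

Lemma Lap_edges (h : V -> int) z : Lap (bmult n) h z =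
  \sum_b \sum_(i < n b) ((bv n b i == z)%:R * (h (bv n b i.+1) - h (bv n b i))
  + (bv n b i.+1 == z)%:R * (h (bv n b i) - h (bv n b i.+1))).
Proof.
rewrite (LapE (@bmult_sym _ n)) /bmult.
under eq_bigr => y _ do rewrite natr_sum mulr_sumr.
rewrite exchange_big; apply: eq_bigr => b _.
under eq_bigr => y _ do rewrite natr_sum mulr_sumr.
rewrite exchange_big; apply: eq_bigr => i _.
exact: (edge_sum h z (ltn_ord i)).
Qed.

Variables (a : 'I_g.+1) (p : nat).
Hypothesis hp : (0 < p < n a)%N.

Definition fs (z : V) : int :=
  match z with inl _ => 0 | inr s => if tag s == a then - phi (n a) p (val (tagged s)).+1 else 0 end.

Lemma fs_bv b q : (q <= n b)%N -> fs (bv n b q) = if b == a then - phi (n a) p q else 0.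
Proof.
move=> /(bv_cases npos) [[-> ->]|[-> ->]|[j [-> ->]]] /=; case: eqP => // E; rewrite /phi; try subst b.
- by rewrite min0n min0n oppr0.
- by rewrite subnn minn0 min0n oppr0.
Qed.

Lemma Lap_fs z : Lap (bmult n) fs z = \sum_(i < n a)
  ((bv n a i == z)%:R * (phi (n a) p i - phi (n a) p i.+1)
   + (bv n a i.+1 == z)%:R * (phi (n a) p i.+1 - phi (n a) p i)).
Proof.
rewrite Lap_edges (bigD1 a) //= [X in _ + X]big1 ?addr0; last first.
  move=> b nb; apply: big1 => i _.
  by rewrite !fs_bv ?(negbTE nb) ?(ltnW (ltn_ord i)) ?(ltn_ord i) // subrr !mulr0 addr0.
apply: eq_bigr => i _.
rewrite !fs_bv ?eqxx ?(ltnW (ltn_ord i)) ?(ltn_ord i) //.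
by congr (_ + _); congr (_ * _); rewrite opprK addrC.
Qed.

Lemma bv_off (z : V) i : tg z != None -> tg z != Some a -> (bv n a i == z) = false.
Proof.
move=> h1 h2; apply/eqP => E; have := tg_bv n a i; rewrite E.
by rewrite (negbTE h1) (negbTE h2).
Qed.

Lemma fire_id (z : V) : xy 1%R 1%R z + Lap (bmult n) fs z
  = pt (bv n a p) 1 z + pt (bv n a (n a - p)) 1 z.
Proof.
rewrite Lap_fs /xy /pt bu_def (bvv_def npos) !mul1r.
case: (bv_cover npos a z) => [[q hq ->]|[h1 h2]].
  rewrite -(bv0 n a) -(bvN npos a) !bv_eq ?leqnn ?leq_subr //; last by case/andP: hp => _ /ltnW.
  under eq_bigr => i _ do rewrite (bv_eq npos (ltnW (ltn_ord i)) hq) (bv_eq npos (ltn_ord i) hq).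
  rewrite big_split /= (sum_ord_ind _ (fun i => phi (n a) p i - phi (n a) p i.+1)).
  rewrite (sum_ord_ind1 _ (fun i => phi (n a) p i.+1 - phi (n a) p i)).
  exact: arith.
rewrite big1; last by move=> i _; rewrite !bv_off // !mul0r addr0.
have -> : (z == inl false) = false by apply/eqP => E; rewrite E in h1.
have -> : (z == inl true) = false by apply/eqP => E; rewrite E in h1.
by rewrite eq_sym bv_off // eq_sym bv_off.
Qed.

End BananaFire.

Lemma uv_w g (n : 'I_g.+1 -> nat) (npos : forall a, (0 < n a)%N) (w : bvert n) :
  equiv_effective (bmult n) (fun z => xy 1%R 1%R z - pt w 1 z).
Proof.
case: w => [[]|s].
- exists (pt (inl false) 1); split; first by move=> x; apply: pt_ge0.
  apply: linequiv_eq => z; rewrite /xy bu_def (bvv_def npos); ring.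
- exists (pt (inl true) 1); split; first by move=> x; apply: pt_ge0.
  apply: linequiv_eq => z; rewrite /xy bu_def (bvv_def npos); ring.
case: s => a j.
have hj : (val j < (n a).-1)%N := ltn_ord j.
have hp : (0 < (val j).+1 < n a)%N by have := npos a; lia.
exists (pt (bv n a (n a - (val j).+1)) 1); split; first by move=> x; apply: pt_ge0.
apply/linequivE; exists (fs a (val j).+1) => z.
have := fire_id npos hp z; rewrite (bvI j) => E.
by rewrite addrAC E addrC addKr.
Qed.
Section Main.
Variables (g : nat) (n : 'I_g.+1 -> nat).
Hypothesis npos : forall a, (0 < n a)%N.
Local Notation V := (bvert n).
Local Notation w0 := (inl false : V).

Definition G (x y : int) : int := rank (bmult n) (@xy g n x y).

Lemma rank_pw (D D' : divisor V) : (forall z, D' z = D z) -> rank (bmult n) D = rank (bmult n) D'.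
Proof. by move=> H; apply: (rank_lin w0); apply: linequiv_eq. Qed.

Lemma Delta_tw a b : Delta (bmult n) (bu n) (bvv n) (twist (bu n) (bvv n) (bD n) a b) =
  G a (g%:Z + b) - G (a - 1) (g%:Z + b) - G a (g%:Z + b - 1) + G (a - 1) (g%:Z + b - 1).
Proof.
rewrite /Delta /G; congr (_ - _ - _ + _); apply: rank_pw => z;
by rewrite /twist /xy /bD /pt; ring.
Qed.

Lemma noneffG x y : ((x < 0) && (y <= g%:Z)) || ((y < 0) && (x <= g%:Z)) -> G x y = -1.
Proof. by move=> H; apply: (rank_neg w0); apply: noneff_xy. Qed.

Lemma xy_eff (c d : nat) : effective (@xy g n c%:Z d%:Z).
Proof. by move=> z; rewrite /xy addr_ge0 // pt_ge0. Qed.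

Lemma rank_prop_diag (c : nat) : forall E : divisor V, effective E -> deg E = c%:Z ->
  equiv_effective (bmult n) (fun z => @xy g n c%:Z c%:Z z - E z).
Proof.
elim: c => [|c IH] E HE Hd.
  have He : equiv_effective (bmult n) (@xy g n 0 0).
    by exists (@xy g n 0 0); split; [exact: xy_eff|exact: linequiv_refl].
  exact: (rank_prop0 He HE Hd).
case: (pickP (fun w => 0 < E w)) => [w Hw | H0]; last first.
  have : deg E = 0.
    rewrite /deg big1 // => z _; have := H0 z; have := HE z; rewrite /=; lia.
  by rewrite Hd.
have HE' : effective (fun z => E z - pt w 1 z).
  move=> z; rewrite /pt; case: (eqVneq z w) => [->|_] /=; last by rewrite mulr0 subr0; exact: HE.
  by rewrite mulr1 subr_ge0.
have Hd' : deg (fun z => E z - pt w 1 z) = c%:Z by rewrite deg_sub deg_pt Hd; lia.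
have [F1 [HF1 L1]] := IH _ HE' Hd'.
have [F2 [HF2 L2]] := uv_w npos w.
exists (fun z => F1 z + F2 z); split; first by move=> z; apply: addr_ge0.
apply: linequiv_trans (linequiv_add L1 L2).
apply: linequiv_eq => z; rewrite /xy /pt intS; ring.
Qed.

Lemma rank_diag (c : nat) : c%:Z <= G c%:Z c%:Z.
Proof.
apply: (rank_ge w0); first by exists (@xy g n c c); split; [exact: xy_eff|exact: linequiv_refl].
exact: rank_prop_diag.
Qed.

Lemma rank_off1 (c : nat) : (c < g)%N -> G c%:Z (c.+1)%:Z <= c%:Z.
Proof.
move=> hc; apply: (rank_le w0) => H.
have := H (pt (bu n) (c.+1)%:Z) (fun z => pt_ge0 _ _ (le0z_nat _)) (deg_pt _ _).
move=> He; apply: (noneff_xy npos (x := -1) (y := (c.+1)%:Z)).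
  by apply/orP; left; apply/andP; split=> //; rewrite lez_nat.
apply: equiv_eff_lin He.
by apply: linequiv_eq => z; rewrite /xy /pt intS; ring.
Qed.

Lemma rank_off2 (c : nat) : (c < g)%N -> G (c.+1)%:Z c%:Z <= c%:Z.
Proof.
move=> hc; apply: (rank_le w0) => H.
have := H (pt (bvv n) (c.+1)%:Z) (fun z => pt_ge0 _ _ (le0z_nat _)) (deg_pt _ _).
move=> He; apply: (noneff_xy npos (x := (c.+1)%:Z) (y := -1)).
  by apply/orP; right; apply/andP; split=> //; rewrite lez_nat.
apply: equiv_eff_lin He.
by apply: linequiv_eq => z; rewrite /xy /pt intS; ring.
Qed.

Lemma Delta_diag (c : nat) : (c <= g)%N ->
  1 <= G c%:Z c%:Z - G (c%:Z - 1) c%:Z - G c%:Z (c%:Z - 1) + G (c%:Z - 1) (c%:Z - 1).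
Proof.
case: c => [|c] hc.
  have h0 := rank_diag 0.
  have e1 : G (0%:Z - 1) 0%:Z = -1 by apply: noneffG; apply/orP; left; apply/andP; split; lia.
  have e2 : G 0%:Z (0%:Z - 1) = -1 by apply: noneffG; apply/orP; right; apply/andP; split; lia.
  have e3 : G (0%:Z - 1) (0%:Z - 1) = -1 by apply: noneffG; apply/orP; left; apply/andP; split; lia.
  rewrite e1 e2 e3; lia.
have -> : (c.+1)%:Z - 1 = c%:Z by lia.
have := rank_diag c.+1; have := rank_diag c; have := rank_off1 hc; have := rank_off2 hc.
lia.
Qed.

End Main.
Theorem mainTheorem19 (g : nat) (n : 'I_g.+1 -> nat) (k : nat) :
  (2 <= g)%N ->
  (forall a : 'I_g.+1, (0 < n a)%N) ->
  is_torsion_order (bmult n) (bu n) (bvv n) k ->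
  submodular (bmult n) (bu n) (bvv n) (bD n) ->
  forall tau : int -> int,
    is_transmission_perm (bmult n) (bu n) (bvv n) (bD n) tau ->
    (forall b : int, 0 <= b <= g%:Z -> tau b = g%:Z - b) /\
    (g <= k)%N /\
    inv_k_ge tau k 'C(g.+1, 2).
Proof.
move=> hg npos [hk0 [hkeq _]] _ tau [_ Htau].
have part1 : forall b : int, 0 <= b <= g%:Z -> tau b = g%:Z - b.
  move=> b /andP [hb0 hbg].
  have [c hc] : exists c : nat, g%:Z - b = c%:Z by exists `|g%:Z - b|%N; lia.
  have hcg : (c <= g)%N by lia.
  have := Htau (g%:Z - b) b; rewrite Delta_tw hc.
  have := Delta_diag npos hcg.
  by case: eqP => // _ H1 H2; rewrite H2 in H1.
have Gshift : forall x y x' y', x' = x + k%:Z -> y' = y - k%:Z -> G n x' y' = G n x y.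
  move=> x y x' y' -> ->; rewrite /G.
  apply: (rank_lin (inl false)).
  have L := linequiv_add hkeq (linequiv_refl (bmult n) (@xy g n x (y - k%:Z))).
  apply: linequiv_trans (linequiv_trans L _).
    by apply: linequiv_eq => z; rewrite /xy /pt; ring.
  by apply: linequiv_eq => z; rewrite /xy /pt; ring.
have part2 : (g <= k)%N.
  case: (leqP g k) => // hlt; exfalso.
  have t0 := part1 0 (ltac:(apply/andP; split; lia)).
  have tk := part1 k%:Z (ltac:(apply/andP; split; lia)).
  have H0 := Htau g%:Z 0.
  have Hk := Htau (g%:Z + k%:Z) k%:Z.
  rewrite Delta_tw in H0; rewrite Delta_tw in Hk.
  rewrite (Gshift g%:Z g%:Z (g%:Z + k%:Z) (g%:Z - k%:Z)) in Hk; [|lia|lia].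
  rewrite (Gshift (g%:Z - 1) g%:Z (g%:Z + k%:Z - 1) (g%:Z - k%:Z)) in Hk; [|lia|lia].
  rewrite (Gshift g%:Z (g%:Z - 1) (g%:Z + k%:Z) (g%:Z - k%:Z - 1)) in Hk; [|lia|lia].
  rewrite (Gshift (g%:Z - 1) (g%:Z - 1) (g%:Z + k%:Z - 1) (g%:Z - k%:Z - 1)) in Hk; [|lia|lia].
  rewrite oppr0 addr0 in H0; rewrite Hk in H0.
  move: H0; rewrite t0 tk subr0 eqxx.
  by case: eqP => // E; lia.
split=> //; split=> //.
pose s := [seq (i%:Z, j%:Z) | j <- iota 0 g.+1, i <- iota 0 j].
have memS : forall p, p \in s -> exists i j : nat, [/\ p = (i%:Z, j%:Z), (i < j)%N & (j <= g)%N].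
  move=> p /allpairsPdep [j [i [hj hi ->]]]; exists i, j.
  by split=> //; move: hj hi; rewrite !mem_iota; lia.
have uS : uniq s.
  apply: allpairs_uniq_dep; first exact: iota_uniq.
    by move=> j _; exact: iota_uniq.
  by move=> [j1 i1] [j2 i2] _ _ /= [-> ->].
exists s; split.
  rewrite size_allpairs_dep (eq_map (size_iota 0)) map_id sumnE -bin2_sum.
  by rewrite /index_iota subn0.
split.
  move=> p /memS [i [j [-> hij hj]]]; rewrite /inversion /=; split; first by rewrite ltz_nat.
  rewrite !part1; try (apply/andP; split; lia).
  lia.
move=> i j /andP [hij hjs] [E1 E2].
have his : (i < size s)%N by apply: ltn_trans hjs.
have := nth_uniq (0, 0) his hjs uS; rewrite (ltn_eqF hij).
have /memS [a [b [Ea hab hb]]] := mem_nth (0, 0) his.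
have /memS [c [d [Ec hcd hd]]] := mem_nth (0, 0) hjs.
rewrite Ea Ec in E1 E2 *; move: E1 E2 => /= E1 /dvdzP [q Eq].
have : q = 0 by nia.
move=> q0; rewrite q0 mul0r in Eq.
have ac : a = c by lia.
have bd : b = d by lia.
by rewrite ac bd eqxx.
Qed.
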